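(* Let $X$, $Y$ be disjoint sets of cardinality at least two, $M\le\mathrm{Sym}(X)$ and $N\le\mathrm{Sym}(Y)$ nontrivial permutation groups, $T$ the $(|X|,|Y|)$-biregular tree, and $c$ a legal colouring. For $v\in V_X$ and $w\in V_Y$, the set $\hat{M}(v) := \{g_{\mu,v} : \mu\in M\}$ is a subgroup of the stabiliser $U_c(M,N)_v$ and $\hat{N}(w):=\{g_{\tau,w} : \tau\in N\}$ is a subgroup of $U_c(M,N)_w$. Moreover $\hat{M}(v)$ is isomorphic to $M$ and $\hat{N}(w)$ is isomorphic to $N$.
   Context: $T$ has natural bipartition $VT=V_X\sqcup V_Y$ (vertices in $V_X$ have valency $|X|$, in $V_Y$ valency $|Y|$). $A(v)$, $\overline{A}(v)$ are the sets of arcs with origin, resp. terminus, $v$. A legal colouring is a map $c:AT\to X\cup Y$ restricting to a bijection $A(v)\to X$ for $v\in V_X$, to a bijection $A(v)\to Y$ for $v\in V_Y$, and constant on each $\overline{A}(v)$. $U_c(M,N)$ is the group of $g\in\mathrm{Aut}(T)$ with $gV_X=V_X$ and $c|_{A(gv)}\circ g|_{A(v)}\circ(c|_{A(v)})^{-1}$ in $M$ for $v\in V_X$ and in $N$ for $v\in V_Y$. For $\mu\in M$, let $\hat\mu\in\mathrm{Sym}(X\cup Y)$ equal $\mu$ on $X$ and the identity on $Y$; for $v\in V_X$, $g_{\mu,v}$ denotes the unique $g\in\mathrm{Aut}(T)$ with $gV_X=V_X$, $gv=v$ and $c=\hat\mu\circ c\circ g$ (such $g$ exists and is unique, and lies in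 $U_c(M,N)$). For $\tau\in N$ and $w\in V_Y$, $\hat\tau$ (equal to $\tau$ on $Y$ and the identity on $X$) and $g_{\tau,w}$ are defined analogously. *)

(* Defs.v *)
From Stdlib Require Import List Relations.
Import ListNotations.
Set Implicit Arguments.

Section Defs.
Variables (X Y V : Type).

Definition bijective_fun (T : Type) (f : T -> T) : Prop :=
  (forall a b, f a = f b -> a = b) /\ (forall b, exists a, f a = b).

Definition perm_group (T : Type) (G : (T -> T) -> Prop) : Prop :=
  (forall f, G f -> bijective_fun f) /\
  G (fun x => x) /\
  (forall f g, G f -> G g -> G (fun x => f (g x))) /\
  (forall f, G f -> exists h, G h /\ forall x, h (f x) = x /\ f (h x) = x).

Definition nontrivial_group (T : Type) (G : (T -> T) -> Prop) : Prop :=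
  exists f, G f /\ f <> (fun x => x).

Definition card_ge2 (T : Type) : Prop := exists a b : T, a <> b.

Fixpoint is_walk (adj : V -> V -> Prop) (l : list V) : Prop :=
  match l with
  | x :: ((y :: _) as t) => adj x y /\ is_walk adj t
  | _ => True
  end.

Fixpoint no_backtrack (l : list V) : Prop :=
  match l with
  | x :: ((y :: z :: _) as t) => x <> z /\ no_backtrack t
  | _ => True
  end.

Definition is_tree (adj : V -> V -> Prop) : Prop :=
  (forall u w, adj u w -> adj w u) /\
  (forall u, ~ adj u u) /\
  (forall u w, clos_refl_trans V adj u w) /\
  (* no reduced closed walk of positive length *)
  (forall v l, is_walk adj (v :: l ++ [v]) -> ~ no_backtrack (v :: l ++ [v])).

Definition valency_card (adj : V -> V -> Prop) (v : V) (T : Type) : Prop :=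
  exists f : T -> V, (forall x, adj v (f x)) /\
                     (forall w, adj v w -> exists! x, f x = w).

Definition biregular_tree (adj : V -> V -> Prop) (VX VY : V -> Prop) : Prop :=
  is_tree adj /\
  (forall v, VX v \/ VY v) /\ (forall v, ~ (VX v /\ VY v)) /\
  (forall u w, adj u w -> (VX u <-> VY w)) /\
  (forall v, VX v -> valency_card adj v X) /\
  (forall v, VY v -> valency_card adj v Y).

(** Colours are X ⊔ Y, modelled as the sum type X + Y; c v w is the colour
    of the arc from v to w. *)
Definition legal_colouring (adj : V -> V -> Prop) (VX VY : V -> Prop)
  (c : V -> V -> X + Y) : Prop :=
  (forall v, VX v ->
     (forall w, adj v w -> exists x, c v w = inl x) /\
     (forall x, exists! w, adj v w /\ c v w = inl x)) /\
  (forall v, VY v ->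
     (forall w, adj v w -> exists y, c v w = inr y) /\
     (forall y, exists! w, adj v w /\ c v w = inr y)) /\
  (forall u u' v, adj u v -> adj u' v -> c u v = c u' v).

Definition is_aut (adj : V -> V -> Prop) (g : V -> V) : Prop :=
  bijective_fun g /\ (forall u w, adj u w <-> adj (g u) (g w)).

Definition hatX (mu : X -> X) (z : X + Y) : X + Y :=
  match z with inl x => inl (mu x) | inr y => inr y end.
Definition hatY (tau : Y -> Y) (z : X + Y) : X + Y :=
  match z with inl x => inl x | inr y => inr (tau y) end.

(** U_c(M,N): the local permutation c|A(gv) ∘ g|A(v) ∘ (c|A(v))^{-1}
    is some element of M (resp. N). *)
Definition in_Uc (adj : V -> V -> Prop) (VX VY : V -> Prop)
  (c : V -> V -> X + Y) (M : (X -> X) -> Prop) (N : (Y -> Y) -> Prop)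
  (g : V -> V) : Prop :=
  is_aut adj g /\ (forall u, VX u <-> VX (g u)) /\
  (forall v, VX v -> exists mu, M mu /\
      forall w, adj v w -> c (g v) (g w) = hatX mu (c v w)) /\
  (forall v, VY v -> exists tau, N tau /\
      forall w, adj v w -> c (g v) (g w) = hatY tau (c v w)).

Definition Uc_stab adj VX VY c M N (v : V) (g : V -> V) : Prop :=
  in_Uc adj VX VY c M N g /\ g v = v.

Definition is_g_mu (adj : V -> V -> Prop) (VX : V -> Prop)
  (c : V -> V -> X + Y) (mu : X -> X) (v : V) (g : V -> V) : Prop :=
  is_aut adj g /\ (forall u, VX u <-> VX (g u)) /\ g v = v /\
  (forall u w, adj u w -> c u w = hatX mu (c (g u) (g w))).

Definition is_g_tau (adj : V -> V -> Prop) (VX : V -> Prop)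
  (c : V -> V -> X + Y) (tau : Y -> Y) (w : V) (g : V -> V) : Prop :=
  is_aut adj g /\ (forall u, VX u <-> VX (g u)) /\ g w = w /\
  (forall u u', adj u u' -> c u u' = hatY tau (c (g u) (g u'))).

Definition Mhat adj VX c (M : (X -> X) -> Prop) (v : V) (g : V -> V) : Prop :=
  exists mu, M mu /\ is_g_mu adj VX c mu v g.
Definition Nhat adj VX c (N : (Y -> Y) -> Prop) (w : V) (g : V -> V) : Prop :=
  exists tau, N tau /\ is_g_tau adj VX c tau w g.

End Defs.

Definition is_subgroup (T : Type) (H K : (T -> T) -> Prop) : Prop :=
  (forall g, H g -> K g) /\
  H (fun x => x) /\
  (forall f g, H f -> H g -> H (fun x => f (g x))) /\
  (forall f, H f -> exists h, H h /\ forall x, h (f x) = x /\ f (h x) = x).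

Definition groups_isomorphic (A B : Type) (G : (A -> A) -> Prop)
  (H : (B -> B) -> Prop) : Prop :=
  exists phi : (A -> A) -> (B -> B),
    (forall f, G f -> H (phi f)) /\
    (forall f f', G f -> G f' -> phi f = phi f' -> f = f') /\
    (forall h, H h -> exists f, G f /\ phi f = h) /\
    (forall f f', G f -> G f' -> phi (fun x => f (f' x)) = (fun y => phi f (phi f' y))).

(* Main.v *)
Require Import Defs.
From Stdlib Require Import List Relations Classical ClassicalEpsilon FunctionalExtensionality Bool Arith.
Import ListNotations.

Lemma is_walk_app (V : Type) (adj : V -> V -> Prop) (l m : list V) (x : V) :
  is_walk adj (l ++ x :: m) <-> is_walk adj (l ++ [x]) /\ is_walk adj (x :: m).
Proof.
  induction l as [|a l IH]; simpl.
  - tauto.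
  - destruct l as [|b l]; simpl in *.
    + destruct m; simpl; tauto.
    + rewrite IH. tauto.
Qed.

Lemma no_backtrack_app (V : Type) (l m : list V) (x y : V) :
  no_backtrack (l ++ x :: y :: m) <-> no_backtrack (l ++ [x; y]) /\ no_backtrack (x :: y :: m).
Proof.
  induction l as [|a l IH]; simpl.
  - destruct m; simpl; tauto.
  - destruct l as [|b l]; simpl in *.
    + destruct m; simpl; tauto.
    + destruct l as [|d l]; simpl in *.
      * destruct m; simpl in *; tauto.
      * rewrite IH. tauto.
Qed.

Lemma is_walk_rev (V : Type) (adj : V -> V -> Prop) :
  (forall u w, adj u w -> adj w u) ->
  forall l, is_walk adj l -> is_walk adj (rev l).
Proof.
  intros Hs l. induction l as [|a l IH]; intros H; simpl; [exact I|].
  destruct l as [|b l]; simpl; [exact I|].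
  simpl in H. destruct H as [Hab Hl].
  specialize (IH Hl). simpl in IH.
  rewrite <- app_assoc. simpl. apply is_walk_app. split; [exact IH|].
  simpl. auto.
Qed.

Lemma no_backtrack_rev (V : Type) :
  forall t (a : V), no_backtrack (a :: t) -> no_backtrack (rev (a :: t)).
Proof.
  induction t as [|b t IH]; intros a H; [exact I|].
  destruct t as [|d t]; [exact I|].
  simpl in H. destruct H as [Had Hr].
  specialize (IH b Hr).
  simpl. rewrite <- !app_assoc. simpl.
  apply no_backtrack_app. split.
  - simpl in IH. rewrite <- app_assoc in IH. exact IH.
  - simpl. split; auto.
Qed.

Definition kind {X Y : Type} (a : X + Y) : bool := match a with inl _ => true | inr _ => false end.

Lemma bool_iff_eq (b1 b2 : bool) : (b1 = true <-> b2 = true) -> b1 = b2.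
Proof. destruct b1, b2; intuition congruence. Qed.

Section Tree.
Variables (X Y V : Type) (adj : V -> V -> Prop) (VX VY : V -> Prop) (c : V -> V -> X + Y).
Hypothesis Htree : biregular_tree X Y adj VX VY.
Hypothesis Hc : legal_colouring adj VX VY c.
Variables (x0 : X) (y0 : Y).

Lemma adj_sym u w : adj u w -> adj w u.
Proof. destruct Htree as [[H _] _]. apply H. Qed.
Lemma bip u : VX u \/ VY u.
Proof. destruct Htree as [_ [H _]]. apply H. Qed.
Lemma disj u : ~ (VX u /\ VY u).
Proof. destruct Htree as [_ [_ [H _]]]. apply H. Qed.
Lemma adj_class u w : adj u w -> (VX u <-> VY w).
Proof. destruct Htree as [_ [_ [_ [H _]]]]. apply H. Qed.

Lemma col_kind u w : adj u w -> (kind (c u w) = true <-> VX u).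
Proof.
  intros H. destruct Hc as [HX [HY _]]. destruct (bip u) as [Hu|Hu].
  - destruct (proj1 (HX u Hu) w H) as [x Hx]. rewrite Hx. simpl. tauto.
  - destruct (proj1 (HY u Hu) w H) as [y Hy]. rewrite Hy. simpl.
    split; [discriminate|]. intros Hu'. exfalso. apply (disj u). tauto.
Qed.

Lemma col_inj u w w' : adj u w -> adj u w' -> c u w = c u w' -> w = w'.
Proof.
  intros H1 H2 He. destruct Hc as [HX [HY _]]. destruct (bip u) as [Hu|Hu].
  - destruct (proj1 (HX u Hu) w H1) as [x Hx].
    destruct (proj2 (HX u Hu) x) as [z [_ Hz]].
    transitivity z; [symmetry|]; apply Hz; split; congruence.
  - destruct (proj1 (HY u Hu) w H1) as [y Hy].
    destruct (proj2 (HY u Hu) y) as [z [_ Hz]].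
    transitivity z; [symmetry|]; apply Hz; split; congruence.
Qed.

Lemma col_ex u (a : X + Y) : (kind a = true <-> VX u) -> exists w, adj u w /\ c u w = a.
Proof.
  intros Hk. destruct Hc as [HX [HY _]]. destruct a as [x|y]; simpl in Hk.
  - destruct (proj2 (HX u (proj1 Hk eq_refl)) x) as [z [Hz _]]. eauto.
  - assert (VY u). { destruct (bip u); [|assumption]. apply proj2 in Hk. discriminate (Hk H). }
    destruct (proj2 (HY u H) y) as [z [Hz _]]. eauto.
Qed.

Lemma has_nb u : exists w, adj w u.
Proof.
  destruct (bip u) as [Hu|Hu].
  - destruct (col_ex u (inl x0)) as [w [Hw _]]. simpl; tauto. exists w. now apply adj_sym.
  - destruct (col_ex u (inr y0)) as [w [Hw _]].
    simpl. split; [discriminate|]. intros. exfalso; apply (disj u); tauto.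
    exists w. now apply adj_sym.
Qed.

Definition nb u := epsilon (inhabits u) (fun w => adj w u).
Definition L u := c (nb u) u.

Lemma nb_adj u : adj (nb u) u.
Proof. unfold nb. apply epsilon_spec. apply has_nb. Qed.

Lemma L1 u w : adj u w -> c u w = L w.
Proof.
  intros H. destruct Hc as [_ [_ H3]]. unfold L. apply H3; auto. apply nb_adj.
Qed.

Lemma L2 u w w' : adj u w -> adj u w' -> L w = L w' -> w = w'.
Proof.
  intros H1 H2 He. apply (col_inj u); auto. rewrite (L1 u w), (L1 u w'); auto.
Qed.

Lemma L3 u w : adj u w -> (kind (L w) = true <-> VX u).
Proof. intros H. rewrite <- (L1 u w H). now apply col_kind. Qed.

Lemma L_kind u : kind (L u) = true <-> VY u.
Proof. rewrite (L3 (nb u) u (nb_adj u)). apply adj_class, nb_adj. Qed.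

Definition step u a := epsilon (inhabits u) (fun w => adj u w /\ L w = a).

Lemma step_spec u a : (kind a = true <-> VX u) -> adj u (step u a) /\ L (step u a) = a.
Proof.
  intros Hk. unfold step. apply epsilon_spec.
  destruct (col_ex u a Hk) as [w [Hw Hw']]. exists w. split; auto.
  rewrite <- Hw'. symmetry. now apply L1.
Qed.

Lemma step_nb u z : adj u z -> step u (L z) = z.
Proof.
  intros H. destruct (step_spec u (L z)) as [H1 H2]. now apply L3.
  apply (L2 u); auto.
Qed.

Lemma VX_not_VY u : VX u <-> ~ VY u.
Proof. split; intros H. intros H'; apply (disj u); tauto. destruct (bip u); tauto. Qed.

Section Root.
Variables (v : V) (b0 : bool).
Hypothesis Hv : VX v <-> b0 = true.

Fixpoint fw (s : list (X + Y)) : V := match s with [] => v | a :: s' => step (fw s') a end.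
Definition lastl (s : list (X + Y)) := match s with [] => L v | a :: _ => a end.
Definition par (n : nat) : bool := Bool.eqb (Nat.even n) b0.
Fixpoint Wr (s : list (X + Y)) : Prop :=
  match s with
  | [] => True
  | a :: s' => Wr s' /\ kind a = par (length s') /\
      match s' with [] => True | _ :: s'' => a <> lastl s'' end
  end.

Lemma par_S n : par (S n) = negb (par n).
Proof. unfold par. rewrite Nat.even_succ, <- Nat.negb_even. destruct (Nat.even n), b0; reflexivity. Qed.

Lemma L5 s : Wr s -> (VX (fw s) <-> par (length s) = true) /\ L (fw s) = lastl s /\
  (forall a s', s = a :: s' -> adj (fw s') (fw s)).
Proof.
  induction s as [|a s IH]; intros H.
  - simpl. unfold par. simpl. split; [|split]; auto.
    + rewrite Hv. destruct b0; simpl; tauto.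
    + intros; discriminate.
  - simpl in H. destruct H as [Hs [Hk _]]. destruct (IH Hs) as [IH1 _].
    destruct (step_spec (fw s) a) as [Ha1 Ha2]. rewrite Hk. tauto.
    simpl. split; [|split]; auto.
    + rewrite par_S. rewrite VX_not_VY, <- (adj_class _ _ Ha1), IH1.
      destruct (par (length s)); simpl; intuition congruence.
    + intros a' s' E. injection E; intros; subst. exact Ha1.
Qed.

Lemma kind_next s y : Wr s -> adj (fw s) y -> kind (L y) = par (length s).
Proof.
  intros Hs H. apply bool_iff_eq. rewrite (L3 _ _ H). apply (L5 s Hs).
Qed.

Fixpoint tr (s : list (X + Y)) : list V :=
  match s with [] => [v] | a :: s' => fw (a :: s') :: tr s' end.

Lemma tr_hd s : exists t, tr s = fw s :: t.
Proof. destruct s; simpl; eauto. Qed.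

Lemma tr_last s : exists l, tr s = l ++ [v].
Proof.
  induction s as [|a s [l IH]]. exists []. reflexivity.
  exists (fw (a :: s) :: l). simpl. simpl in IH. rewrite IH. reflexivity.
Qed.

Lemma tr_walk s : Wr s -> is_walk adj (tr s) /\ no_backtrack (tr s).
Proof.
  induction s as [|a s IH]; intros H. simpl; tauto.
  destruct (IH (proj1 H)) as [IH1 IH2].
  change (tr (a :: s)) with (fw (a :: s) :: tr s).
  assert (Hadj : adj (fw (a :: s)) (fw s)).
  { apply adj_sym. exact (proj2 (proj2 (L5 _ H)) a s eq_refl). }
  destruct s as [|b s].
  - simpl. split; auto.
  - change (tr (b :: s)) with (fw (b :: s) :: tr s) in *.
    destruct (tr_hd s) as [t' Ht']. rewrite Ht' in *. simpl. split.
    + simpl in IH1. tauto.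
    + split; [|exact IH2].
      intros E. assert (Hw : Wr (a :: b :: s)) by exact H. destruct H as [Hs [_ Hne]]. apply Hne.
      rewrite <- (proj1 (proj2 (L5 _ (proj1 Hs)))).

      transitivity (L (fw (a :: b :: s))). symmetry. exact (proj1 (proj2 (L5 _ Hw))).
      simpl in E |- *. rewrite E. reflexivity.
Qed.

Hypothesis Hnocyc : forall l, is_walk adj (v :: l ++ [v]) -> ~ no_backtrack (v :: l ++ [v]).

Lemma fw_not_v a s : Wr (a :: s) -> fw (a :: s) <> v.
Proof.
  intros H E. destruct (tr_walk _ H) as [H1 H2].
  destruct (tr_last s) as [l Hl].
  change (tr (a :: s)) with (fw (a :: s) :: tr s) in H1, H2.
  rewrite E, Hl in H1, H2. exact (Hnocyc l H1 H2).
Qed.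

Lemma fw_inj : forall s t, Wr s -> Wr t -> fw s = fw t -> s = t.
Proof.
  induction s as [|a s IH]; intros t Hs Ht E; destruct t as [|b t].
  - reflexivity.
  - exfalso. apply (fw_not_v b t Ht). now symmetry.
  - exfalso. apply (fw_not_v a s Hs). exact E.
  - assert (a = b).
    { pose proof (proj1 (proj2 (L5 _ Hs))) as X1. pose proof (proj1 (proj2 (L5 _ Ht))) as X2.
      simpl in X1, X2. rewrite <- X1, <- X2. simpl in E. now rewrite E. }
    subst b.
    destruct (classic (fw s = fw t)) as [E'|E'].
    + f_equal. apply IH; auto. exact (proj1 Hs). exact (proj1 Ht).
    + exfalso.
      pose proof (tr_walk _ Hs) as [Ws Ns].
      pose proof (tr_walk _ Ht) as [Wt Nt].
      pose proof (tr_walk _ (proj1 Hs)) as [Ws' Ns'].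
      pose proof (tr_walk _ (proj1 Ht)) as [Wt' Nt'].
      assert (As : adj (fw s) (fw (a :: s))) by exact (proj2 (proj2 (L5 _ Hs)) a s eq_refl).
      assert (At : adj (fw t) (fw (a :: t))) by exact (proj2 (proj2 (L5 _ Ht)) a t eq_refl).
      set (u := fw (a :: s)) in *.
      assert (Eu : fw (a :: t) = u) by (symmetry; exact E). rewrite Eu in At.
      change (tr (a :: s)) with (u :: tr s) in Ws, Ns.
      change (tr (a :: t)) with (fw (a :: t) :: tr t) in Wt, Nt. rewrite Eu in Wt, Nt.
      assert (HW : is_walk adj (rev (tr s) ++ u :: tr t) /\ no_backtrack (rev (tr s) ++ u :: tr t)).
      { destruct (tr_hd s) as [ps Hps]. destruct (tr_hd t) as [qs Hqs].
        rewrite Hps, Hqs in *. simpl rev. rewrite <- app_assoc. simpl. split.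
        - apply is_walk_app. split.
          + exact (is_walk_rev _ adj adj_sym _ Ws').
          + simpl. split; [exact As|]. split; [apply adj_sym; exact At|]. simpl in Wt'. exact Wt'.
        - apply no_backtrack_app. split.
          + pose proof (no_backtrack_rev _ _ _ Ns) as R. simpl in R. rewrite <- app_assoc in R. exact R.
          + simpl. split; [exact E'|]. exact Nt. }
      destruct (tr_last s) as [l1 Hl1]. destruct (tr_last t) as [l2 Hl2].
      assert (EL : rev (tr s) ++ u :: tr t = v :: (rev l1 ++ u :: l2) ++ [v]).
      { rewrite Hl1, Hl2, rev_app_distr. simpl. rewrite <- app_assoc. reflexivity. }
      rewrite EL in HW. destruct HW as [HW1 HW2]. exact (Hnocyc _ HW1 HW2).
Qed.

Hypothesis Hconn : forall u w, clos_refl_trans V adj u w.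

Lemma fw_surj u : exists s, Wr s /\ fw s = u.
Proof.
  pose proof (clos_rt_rtn1 _ _ _ _ (Hconn v u)) as H.
  induction H as [|y z Hyz _ [s [Hs Es]]].
  - exists []. simpl. auto.
  - destruct s as [|b s'].
    + exists [L z]. simpl in Es. subst y. simpl. split.
      * split; auto. split; auto. exact (kind_next [] z I Hyz).
      * apply step_nb. exact Hyz.
    + destruct (classic (L z = lastl s')) as [Ez|Ez].
      * exists s'. split. exact (proj1 Hs).
        assert (A1 : adj (fw (b :: s')) (fw s')).
        { apply adj_sym. exact (proj2 (proj2 (L5 _ Hs)) b s' eq_refl). }
        rewrite Es in A1. symmetry. apply (L2 y); auto.
        rewrite Ez. symmetry. exact (proj1 (proj2 (L5 _ (proj1 Hs)))).
      * exists (L z :: b :: s'). split.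
        -- simpl. split; [exact Hs|]. split; [|exact Ez].
           apply (kind_next (b :: s')). exact Hs. rewrite Es. exact Hyz.
        -- change (step (fw (b :: s')) (L z) = z). rewrite Es. apply step_nb. exact Hyz.
Qed.

Definition A u := epsilon (inhabits []) (fun s => Wr s /\ fw s = u).

Lemma A_spec u : Wr (A u) /\ fw (A u) = u.
Proof. unfold A. apply epsilon_spec. apply fw_surj. Qed.

Lemma A_fw s : Wr s -> A (fw s) = s.
Proof. intros H. apply fw_inj; auto. apply A_spec. apply A_spec. Qed.

Lemma ADJ x y : adj x y <-> (exists a, A y = a :: A x) \/ (exists a, A x = a :: A y).
Proof.
  split.
  - intros H. destruct (A_spec x) as [Wx Ex].
    remember (A x) as s eqn:Hs. destruct s as [|b s'].
    + left. exists (L y). rewrite <- (A_fw [L y]). f_equal. simpl in Ex |- *. rewrite Ex. symmetry. now apply step_nb.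
      simpl. split; auto. split; auto. apply (kind_next [] y I). simpl in Ex |- *. now rewrite Ex.
    + destruct (classic (L y = lastl s')) as [Ez|Ez].
      * right. exists b. f_equal. rewrite <- (A_fw s' (proj1 Wx)). f_equal.
        assert (A1 : adj (fw (b :: s')) (fw s')).
        { apply adj_sym. exact (proj2 (proj2 (L5 _ Wx)) b s' eq_refl). }
        rewrite Ex in A1. apply (L2 x); auto.
        rewrite Ez. first [exact (proj1 (proj2 (L5 _ (proj1 Wx)))) | symmetry; exact (proj1 (proj2 (L5 _ (proj1 Wx))))].
      * left. exists (L y). rewrite <- (A_fw (L y :: b :: s')). f_equal.
        change (y = step (fw (b :: s')) (L y)). rewrite Ex. symmetry. now apply step_nb.
        simpl. split; [exact Wx|]. split; [|exact Ez].
        apply (kind_next (b :: s')). exact Wx. rewrite Ex. exact H.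
  - intros [[a Ha]|[a Ha]].
    + destruct (A_spec y) as [Wy Ey]. rewrite Ha in Wy, Ey.
      rewrite <- Ey. rewrite <- (proj2 (A_spec x)) at 1.
      exact (proj2 (proj2 (L5 _ Wy)) a _ eq_refl).
    + apply adj_sym. destruct (A_spec x) as [Wx Ex]. rewrite Ha in Wx, Ex.
      rewrite <- Ex. rewrite <- (proj2 (A_spec y)) at 1.
      exact (proj2 (proj2 (L5 _ Wx)) a _ eq_refl).
Qed.

Lemma Wr_map (f : X + Y -> X + Y) :
  (forall a, kind (f a) = kind a) -> f (L v) = L v -> (forall a b, f a = f b -> a = b) ->
  forall s, Wr s -> Wr (map f s).
Proof.
  intros Hk Hv' Hi. induction s as [|a s IH]; intros H; simpl; auto.
  destruct H as [Hs [Ha Hne]]. split; [auto|]. split.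
  - rewrite Hk, length_map. exact Ha.
  - destruct s as [|b s]; simpl; auto. intros E. apply Hne.
    apply Hi. rewrite E. destruct s; simpl; auto.
Qed.

Section Sig.
Variables (sg sg' : X + Y -> X + Y).
Hypothesis Hk : forall a, kind (sg a) = kind a.
Hypothesis Hfix : sg (L v) = L v.
Hypothesis Hi1 : forall a, sg' (sg a) = a.
Hypothesis Hi2 : forall a, sg (sg' a) = a.

Lemma mapK s : map sg' (map sg s) = s.
Proof. rewrite map_map. rewrite (map_ext _ (fun a => a)); [apply map_id|]. exact Hi1. Qed.

Lemma Wr_sg s : Wr s -> Wr (map sg s).
Proof.
  apply Wr_map; auto. intros a b E. rewrite <- (Hi1 a), <- (Hi1 b). now rewrite E.
Qed.

Definition Gf u := fw (map sg (A u)).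

Lemma A_G u : A (Gf u) = map sg (A u).
Proof. apply A_fw. apply Wr_sg. apply A_spec. Qed.

Lemma construct : exists g, is_aut adj g /\ (forall u, VX u <-> VX (g u)) /\ g v = v /\
  (forall u w, adj u w -> c (g u) (g w) = sg (c u w)).
Proof.
  assert (Hk' : forall a, kind (sg' a) = kind a).
  { intros a. rewrite <- (Hk (sg' a)), Hi2. reflexivity. }
  assert (Hfix' : sg' (L v) = L v). { rewrite <- Hfix at 1. apply Hi1. }
  assert (Wr_sg' : forall s, Wr s -> Wr (map sg' s)).
  { apply Wr_map; auto. intros a b E. rewrite <- (Hi2 a), <- (Hi2 b). now rewrite E. }
  assert (Ainj : forall u u', A u = A u' -> u = u').
  { intros u u' E. rewrite <- (proj2 (A_spec u)), <- (proj2 (A_spec u')). now rewrite E. }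
  exists Gf. split; [split; [split|]|split; [|split]].
  - intros a b E. apply Ainj. rewrite <- (mapK (A a)), <- (mapK (A b)), <- !A_G, E. reflexivity.
  - intros b. exists (fw (map sg' (A b))). unfold Gf.
    rewrite A_fw by (apply Wr_sg'; apply A_spec).
    rewrite map_map, (map_ext _ (fun a => a)), map_id by exact Hi2. apply A_spec.
  - intros u w. rewrite !ADJ, !A_G. split.
    + intros [[a Ha]|[a Ha]]; [left|right]; exists (sg a); rewrite Ha; reflexivity.
    + intros [[a Ha]|[a Ha]]; [left|right]; exists (sg' a).
      * rewrite <- (mapK (A w)), Ha. simpl. rewrite mapK. reflexivity.
      * rewrite <- (mapK (A u)), Ha. simpl. rewrite mapK. reflexivity.
  - intros u. rewrite <- (proj2 (A_spec (Gf u))).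
    rewrite (proj1 (L5 _ (proj1 (A_spec (Gf u))))), A_G, length_map.
    rewrite <- (proj1 (L5 _ (proj1 (A_spec u)))), (proj2 (A_spec u)). reflexivity.
  - unfold Gf. change v with (fw []) at 1. rewrite A_fw by exact I. reflexivity.
  - intros u w H. assert (H' : adj (Gf u) (Gf w)).
    { apply ADJ. apply ADJ in H. rewrite !A_G.
      destruct H as [[a Ha]|[a Ha]]; [left|right]; exists (sg a); rewrite Ha; reflexivity. }
    rewrite (L1 _ _ H), (L1 _ _ H').
    rewrite <- (proj2 (A_spec (Gf w))), (proj1 (proj2 (L5 _ (proj1 (A_spec (Gf w)))))), A_G.
    rewrite <- (proj2 (A_spec w)) at 2. rewrite (proj1 (proj2 (L5 _ (proj1 (A_spec w))))).
    destruct (A w); simpl; auto.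
Qed.
End Sig.
End Root. End Tree.

Definition Pg {X Y V Z : Type} (adj : V -> V -> Prop) (VX : V -> Prop) (c : V -> V -> X + Y)
  (hat : (Z -> Z) -> X + Y -> X + Y) (mu : Z -> Z) (v : V) (g : V -> V) : Prop :=
  is_aut adj g /\ (forall u, VX u <-> VX (g u)) /\ g v = v /\
  (forall u w, adj u w -> c u w = hat mu (c (g u) (g w))).

Lemma aut_comp (V : Type) (adj : V -> V -> Prop) g1 g2 :
  is_aut adj g1 -> is_aut adj g2 -> is_aut adj (fun x => g1 (g2 x)).
Proof.
  intros [[I1 S1] A1] [[I2 S2] A2]. split; [split|].
  - intros a b E. apply I2, I1, E.
  - intros b. destruct (S1 b) as [a1 E1]. destruct (S2 a1) as [a2 E2]. exists a2. congruence.
  - intros u w. rewrite A2, A1. tauto.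
Qed.

Lemma bij_inv (V : Type) (g : V -> V) : bijective_fun g ->
  exists h, forall x, h (g x) = x /\ g (h x) = x.
Proof.
  intros [I S]. exists (fun b => proj1_sig (constructive_indefinite_description _ (S b))).
  intros x. split.
  - apply I. exact (proj2_sig (constructive_indefinite_description _ (S (g x)))).
  - exact (proj2_sig (constructive_indefinite_description _ (S x))).
Qed.

Lemma aut_inv (V : Type) (adj : V -> V -> Prop) g h :
  is_aut adj g -> (forall x, h (g x) = x /\ g (h x) = x) -> is_aut adj h.
Proof.
  intros [[I S] A] Hh. split; [split|].
  - intros a b E. rewrite <- (proj2 (Hh a)), <- (proj2 (Hh b)). now rewrite E.
  - intros b. exists (g b). apply Hh.
  - intros u w. rewrite (A (h u) (h w)), (proj2 (Hh u)), (proj2 (Hh w)). tauto.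
Qed.

Section Grp.
Variables (X Y V Z : Type) (adj : V -> V -> Prop) (VX VY : V -> Prop) (c : V -> V -> X + Y)
  (G : (Z -> Z) -> Prop) (hat : (Z -> Z) -> X + Y -> X + Y) (v : V).
Hypothesis Htree : biregular_tree X Y adj VX VY.
Hypothesis Hc : legal_colouring adj VX VY c.
Hypothesis HG : perm_group G.
Hypothesis hat_id : forall z, hat (fun x => x) z = z.
Hypothesis hat_comp : forall f g z, hat (fun x => f (g x)) z = hat f (hat g z).
Hypothesis HD : forall mu mu', G mu -> G mu' ->
  (forall w, adj v w -> hat mu (c v w) = hat mu' (c v w)) -> mu = mu'.
Hypothesis HE : forall f mu, G f -> G mu -> (forall x, mu (f x) = x /\ f (mu x) = x) ->
  exists g, Pg adj VX c hat mu v g.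

Lemma hat_inv mu mu' z : (forall x, mu' (mu x) = x) -> hat mu' (hat mu z) = z.
Proof.
  intros H. rewrite <- hat_comp.
  replace (fun x => mu' (mu x)) with (fun x : Z => x) by (apply functional_extensionality; intros; now rewrite H).
  apply hat_id.
Qed.

Lemma G_inv f : G f -> exists h, G h /\ forall x, h (f x) = x /\ f (h x) = x.
Proof. destruct HG as [_ [_ [_ H]]]. apply H. Qed.

Lemma hat_inj mu a b : G mu -> hat mu a = hat mu b -> a = b.
Proof.
  intros Gm E. destruct (G_inv mu Gm) as [h [_ Hh]].
  rewrite <- (hat_inv mu h a), <- (hat_inv mu h b) by apply Hh. now rewrite E.
Qed.

Lemma P_comp mu1 mu2 g1 g2 : Pg adj VX c hat mu1 v g1 -> Pg adj VX c hat mu2 v g2 ->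
  Pg adj VX c hat (fun x => mu2 (mu1 x)) v (fun x => g1 (g2 x)).
Proof.
  intros [A1 [C1 [F1 H1]]] [A2 [C2 [F2 H2]]]. split; [|split; [|split]].
  - now apply aut_comp.
  - intros u. rewrite C2, C1. tauto.
  - rewrite F2. exact F1.
  - intros u w H. rewrite hat_comp. rewrite (H2 u w H). f_equal. apply H1.
    apply (proj1 (proj2 A2 u w)). exact H.
Qed.

Lemma P_inv mu mu' g h : Pg adj VX c hat mu v g -> (forall x, mu' (mu x) = x) ->
  (forall x, h (g x) = x /\ g (h x) = x) -> Pg adj VX c hat mu' v h.
Proof.
  intros [A1 [C1 [F1 H1]]] Hm Hh. split; [|split; [|split]].
  - exact (aut_inv _ adj g h A1 Hh).
  - intros u. rewrite (C1 (h u)), (proj2 (Hh u)). tauto.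
  - rewrite <- F1 at 1. apply Hh.
  - intros u w H. assert (H' : adj (h u) (h w)).
    { apply (proj2 (proj2 A1 (h u) (h w))). rewrite (proj2 (Hh u)), (proj2 (Hh w)). exact H. }
    rewrite (H1 _ _ H'), (proj2 (Hh u)), (proj2 (Hh w)). symmetry. now apply hat_inv.
Qed.

Lemma P_unique mu g g' : G mu -> Pg adj VX c hat mu v g -> Pg adj VX c hat mu v g' -> g = g'.
Proof.
  intros Gm [A1 [C1 [F1 H1]]] [A2 [C2 [F2 H2]]]. apply functional_extensionality. intros u.
  assert (Hconn : clos_refl_trans V adj v u).
  { destruct Htree as [[_ [_ [H _]]] _]. apply H. }
  apply clos_rt_rtn1 in Hconn. induction Hconn as [|y z Hyz _ IH].
  - congruence.
  - apply (col_inj X Y V adj VX VY c Htree Hc (g y)).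
    + apply (proj1 (proj2 A1 y z)). exact Hyz.
    + rewrite IH. apply (proj1 (proj2 A2 y z)). exact Hyz.
    + apply (hat_inj mu); auto. rewrite <- (H1 _ _ Hyz), IH. apply H2. exact Hyz.
Qed.

Lemma P_det mu mu' g : G mu -> G mu' -> Pg adj VX c hat mu v g -> Pg adj VX c hat mu' v g -> mu = mu'.
Proof.
  intros Gm Gm' [A1 [C1 [F1 H1]]] [A2 [C2 [F2 H2]]]. apply HD; auto.
  intros w Hw. destruct (proj2 (proj1 A1) w) as [w0 E].
  assert (Hw0 : adj v w0). { apply (proj2 (proj2 A1 v w0)). rewrite F1, E. exact Hw. }
  rewrite <- E, <- F1. rewrite <- (H1 _ _ Hw0). apply H2. exact Hw0.
Qed.

Definition Hset (g : V -> V) : Prop := exists mu, G mu /\ Pg adj VX c hat mu v g.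

Lemma grp_sub3 : Hset (fun x => x) /\
  (forall f g, Hset f -> Hset g -> Hset (fun x => f (g x))) /\
  (forall f, Hset f -> exists h, Hset h /\ forall x, h (f x) = x /\ f (h x) = x).
Proof.
  destruct HG as [_ [Gid [Gcomp _]]].
  split; [|split].
  - exists (fun x => x). split; auto. split; [|split; [|split]].
    + split; [split|]. auto. intros b; exists b; auto. tauto.
    + tauto.
    + reflexivity.
    + intros. symmetry. apply hat_id.
  - intros f g [mu1 [G1 P1]] [mu2 [G2 P2]]. exists (fun x => mu2 (mu1 x)). split.
    + now apply Gcomp.
    + now apply P_comp.
  - intros f [mu [Gm Pm]]. destruct (G_inv mu Gm) as [mu' [Gm' Hm]].
    destruct (bij_inv _ f (proj1 (proj1 Pm))) as [h Hh].
    exists h. split; auto. exists mu'. split; auto. apply (P_inv mu mu' f h); auto. apply Hm.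
Qed.

Definition Ginv (f : Z -> Z) (mu : Z -> Z) : Prop := G mu /\ forall x, mu (f x) = x /\ f (mu x) = x.

Lemma Ginv_unique f mu mu' : Ginv f mu -> Ginv f mu' -> mu = mu'.
Proof.
  intros [_ H1] [_ H2]. apply functional_extensionality. intros x.
  rewrite <- (proj2 (H2 x)) at 1. apply H1.
Qed.

Definition phi (f : Z -> Z) : V -> V :=
  epsilon (inhabits (fun x => x)) (fun g => exists mu, Ginv f mu /\ Pg adj VX c hat mu v g).

Lemma phi_spec f : G f -> exists mu, Ginv f mu /\ Pg adj VX c hat mu v (phi f).
Proof.
  intros Gf. unfold phi. apply epsilon_spec.
  destruct (G_inv f Gf) as [mu [Gm Hm]].
  destruct (HE f mu Gf Gm Hm) as [g Pg0]. exists g, mu. split; auto. split; auto.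
Qed.

Lemma grp_iso : groups_isomorphic G Hset.
Proof.
  destruct HG as [_ [Gid [Gcomp _]]].
  exists phi. split; [|split; [|split]].
  - intros f Gf. destruct (phi_spec f Gf) as [mu [[Gm _] P]]. exists mu. auto.
  - intros f f' Gf Gf' E. destruct (phi_spec f Gf) as [mu [[Gm Hm] P]].
    destruct (phi_spec f' Gf') as [mu' [[Gm' Hm'] P']]. rewrite <- E in P'.
    pose proof (P_det mu mu' _ Gm Gm' P P') as Em. subst mu'.
    apply functional_extensionality. intros x.
    rewrite <- (proj1 (Hm' x)) at 1. apply (proj2 (Hm (f' x))).
  - intros h [mu [Gm P]]. destruct (G_inv mu Gm) as [f [Gf Hf]].
    exists f. split; auto. destruct (phi_spec f Gf) as [mu' [Hi P']].
    assert (mu' = mu). { apply (Ginv_unique f); auto. split; auto. intros x; split; apply Hf. }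
    subst mu'. apply (P_unique mu); auto.
  - intros f f' Gf Gf'.
    destruct (phi_spec f Gf) as [mu1 [[G1 H1] P1]].
    destruct (phi_spec f' Gf') as [mu2 [[G2 H2] P2]].
    destruct (phi_spec (fun x => f (f' x)) (Gcomp _ _ Gf Gf')) as [mu3 [I3 P3]].
    pose proof (P_comp _ _ _ _ P1 P2) as P12.
    assert (mu3 = fun x => mu2 (mu1 x)).
    { apply (Ginv_unique (fun x => f (f' x))); auto. split; [now apply Gcomp|].
      intros x. split.
      - rewrite (proj1 (H1 _)). apply H2.
      - rewrite (proj2 (H2 _)). apply H1. }
    subst mu3. apply (P_unique (fun x => mu2 (mu1 x))); auto.
Qed.
End Grp.

Lemma kind_false_inr (X Y : Type) (a : X + Y) : kind a <> true -> exists y, a = inr y.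
Proof. destruct a; simpl; [intros H; now destruct H|eauto]. Qed.
Lemma kind_true_inl (X Y : Type) (a : X + Y) : kind a = true -> exists x, a = inl x.
Proof. destruct a; simpl; [eauto|discriminate]. Qed.

Theorem proposition3p9 (X Y V : Type) (adj : V -> V -> Prop) (VX VY : V -> Prop)
  (M : (X -> X) -> Prop) (N : (Y -> Y) -> Prop) (c : V -> V -> X + Y) :
  card_ge2 X -> card_ge2 Y ->
  perm_group M -> perm_group N ->
  nontrivial_group M -> nontrivial_group N ->
  biregular_tree X Y adj VX VY ->
  legal_colouring adj VX VY c ->
  forall v w, VX v -> VY w ->
    is_subgroup (Mhat adj VX c M v) (Uc_stab adj VX VY c M N v) /\
    is_subgroup (Nhat adj VX c N w) (Uc_stab adj VX VY c M N w) /\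
    groups_isomorphic M (Mhat adj VX c M v) /\
    groups_isomorphic N (Nhat adj VX c N w).
Proof.
  intros [x0 _] [y0 _] HM HN _ _ Htree Hc v w Hv Hw.
  assert (Hnocyc : forall r l, is_walk adj (r :: l ++ [r]) -> ~ no_backtrack (r :: l ++ [r])).
  { destruct Htree as [[_ [_ [_ H]]] _]. intros r l. apply H. }
  assert (Hconn : forall u u', clos_refl_trans V adj u u').
  { destruct Htree as [[_ [_ [H _]]] _]. apply H. }
  pose proof (legal := Hc). destruct legal as [LX [LY _]].
  assert (nVXw : ~ VX w). { intros H. apply (disj X Y V adj VX VY Htree w). tauto. }
  assert (nVYv : ~ VY v). { intros H. apply (disj X Y V adj VX VY Htree v). tauto. }
  assert (EM : Mhat adj VX c M v = Hset X Y V X adj VX c M (@hatX X Y) v) by reflexivity.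
  assert (EN : Nhat adj VX c N w = Hset X Y V Y adj VX c N (@hatY X Y) w) by reflexivity.
  assert (hX_id : forall z, @hatX X Y (fun x => x) z = z) by (intros []; reflexivity).
  assert (hX_comp : forall f g z, @hatX X Y (fun x => f (g x)) z = hatX f (hatX g z)) by (intros f g []; reflexivity).
  assert (hY_id : forall z, @hatY X Y (fun x => x) z = z) by (intros []; reflexivity).
  assert (hY_comp : forall f g z, @hatY X Y (fun x => f (g x)) z = hatY f (hatY g z)) by (intros f g []; reflexivity).
  assert (HDX : forall mu mu', M mu -> M mu' ->
    (forall u, adj v u -> hatX mu (c v u) = hatX mu' (c v u)) -> mu = mu').
  { intros mu mu' _ _ H. apply functional_extensionality. intros x.
    destruct (proj2 (LX v Hv) x) as [u [[Hu Hcu] _]].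
    specialize (H u Hu). rewrite Hcu in H. simpl in H. congruence. }
  assert (HDY : forall mu mu', N mu -> N mu' ->
    (forall u, adj w u -> hatY mu (c w u) = hatY mu' (c w u)) -> mu = mu').
  { intros mu mu' _ _ H. apply functional_extensionality. intros x.
    destruct (proj2 (LY w Hw) x) as [u [[Hu Hcu] _]].
    specialize (H u Hu). rewrite Hcu in H. simpl in H. congruence. }
  assert (HEX : forall f mu, M f -> M mu -> (forall x, mu (f x) = x /\ f (mu x) = x) ->
    exists g, Pg adj VX c (@hatX X Y) mu v g).
  { intros f mu _ _ Hm.
    assert (Hi1 : forall a : X + Y, hatX mu (hatX f a) = a) by (intros [a|a]; simpl; f_equal; apply Hm).
    destruct (construct X Y V adj VX VY c Htree Hc x0 y0 v true
      ltac:(tauto) (Hnocyc v) Hconn (hatX f) (hatX mu)) as [g [A1 [C1 [F1 H1]]]].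
    - intros []; reflexivity.
    - destruct (kind_false_inr _ _ (L X Y V adj c v)) as [y Ey].
      { rewrite (L_kind X Y V adj VX VY c Htree Hc x0 y0). exact nVYv. }
      rewrite Ey. reflexivity.
    - exact Hi1.
    - intros []; simpl; f_equal; apply Hm.
    - exists g. split; [exact A1|]. split; [exact C1|]. split; [exact F1|].
      intros u u' H. rewrite (H1 u u' H). symmetry. apply Hi1. }
  assert (HEY : forall f mu, N f -> N mu -> (forall x, mu (f x) = x /\ f (mu x) = x) ->
    exists g, Pg adj VX c (@hatY X Y) mu w g).
  { intros f mu _ _ Hm.
    assert (Hi1 : forall a : X + Y, hatY mu (hatY f a) = a) by (intros [a|a]; simpl; f_equal; apply Hm).
    destruct (construct X Y V adj VX VY c Htree Hc x0 y0 w false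
      ltac:(split; [tauto|discriminate]) (Hnocyc w) Hconn (hatY f) (hatY mu)) as [g [A1 [C1 [F1 H1]]]].
    - intros []; reflexivity.
    - destruct (kind_true_inl _ _ (L X Y V adj c w)) as [y Ey].
      { rewrite (L_kind X Y V adj VX VY c Htree Hc x0 y0). exact Hw. }
      rewrite Ey. reflexivity.
    - exact Hi1.
    - intros []; simpl; f_equal; apply Hm.
    - exists g. split; [exact A1|]. split; [exact C1|]. split; [exact F1|].
      intros u u' H. rewrite (H1 u u' H). symmetry. apply Hi1. }
  pose proof (grp_sub3 X Y V X adj VX c M (@hatX X Y) v HM hX_id hX_comp) as SX.
  pose proof (grp_sub3 X Y V Y adj VX c N (@hatY X Y) w HN hY_id hY_comp) as SY.
  pose proof (grp_iso X Y V X adj VX VY c M (@hatX X Y) v Htree Hc HM hX_id hX_comp HDX HEX) as IX.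
  pose proof (grp_iso X Y V Y adj VX VY c N (@hatY X Y) w Htree Hc HN hY_id hY_comp HDY HEY) as IY.
  rewrite EM, EN. split; [|split; [|split; assumption]].
  - split; [|exact SX].
    intros g [mu [Gm [A1 [C1 [F1 H1]]]]]. split; [|exact F1].
    split; [exact A1|]. split; [exact C1|]. split.
    + intros u Hu. destruct HM as [_ [_ [_ Hinv]]]. destruct (Hinv mu Gm) as [mu' [Gm' Hm]].
      exists mu'. split; auto. intros u' Hu'. rewrite (H1 u u' Hu').
      destruct (c (g u) (g u')); simpl; f_equal; symmetry; apply (proj1 (Hm _)).
    + intros u Hu. exists (fun y => y). split; [apply HN|].
      intros u' Hu'. rewrite hY_id. rewrite (H1 u u' Hu').
      assert (Hg : adj (g u) (g u')) by exact (proj1 (proj2 A1 u u') Hu').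
      destruct (kind_false_inr _ _ (c (g u) (g u'))) as [y Ey].
      { rewrite (col_kind X Y V adj VX VY c Htree Hc _ _ Hg), <- C1.
        intros H; apply (disj X Y V adj VX VY Htree u); tauto. }
      rewrite Ey. reflexivity.
  - split; [|exact SY].
    intros g [mu [Gm [A1 [C1 [F1 H1]]]]]. split; [|exact F1].
    split; [exact A1|]. split; [exact C1|]. split.
    + intros u Hu. exists (fun y => y). split; [apply HM|].
      intros u' Hu'. rewrite hX_id. rewrite (H1 u u' Hu').
      assert (Hg : adj (g u) (g u')) by exact (proj1 (proj2 A1 u u') Hu').
      destruct (kind_true_inl _ _ (c (g u) (g u'))) as [y Ey].
      { rewrite (col_kind X Y V adj VX VY c Htree Hc _ _ Hg), <- C1. exact Hu. }
      rewrite Ey. reflexivity.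
    + intros u Hu. destruct HN as [_ [_ [_ Hinv]]]. destruct (Hinv mu Gm) as [mu' [Gm' Hm]].
      exists mu'. split; auto. intros u' Hu'. rewrite (H1 u u' Hu').
      destruct (c (g u) (g u')); simpl; f_equal; symmetry; apply (proj1 (Hm _)).
Qed.
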